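(* Let $m,n,k$ be positive integers. If $\vartheta\big(\overline{G_D(K_{m,n})}\big) > k$ for every circular drawing $D$ of $K_{m,n}$, then $\nu_k(K_{m,n})>0$.
   Context: A circular drawing $D$ of $K_{m,n}$ places the $m+n$ vertices at distinct points of a circle and draws each edge as the straight chord between its endpoints. The auxiliary graph $G_D(K_{m,n})$ has as vertex set the edge set of $K_{m,n}$, two vertices being adjacent iff the corresponding chords cross in $D$. $\overline{H}$ denotes the complement of a graph $H$. For a graph $G=(V,E)$, the Lovász number is $\vartheta(G):=\max\{\sum_{i,j\in V}X_{ij} : X\in\mathbb{R}^{V\times V}\text{ positive semidefinite},\ X_{ij}=0 \text{ for } \{i,j\}\in E,\ \mathrm{trace}(X)=1\}$. A book with $k$ pages consists of a line (the spine) and $k$ half-planes (pages) bounded by it; a $k$-page drawing places vertices on the spine and each edge in a single page; $\nu_k(G)$ is the minimum number of crossings over all $k$-page drawings of $G$. *)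

(* Defs.v *)
From HB Require Import structures.
From mathcomp Require Import all_boot all_order all_algebra.
From mathcomp Require Import classical_sets reals.
Set Implicit Arguments. Unset Strict Implicit. Unset Printing Implicit Defensive.
Import Order.TTheory GRing.Theory Num.Theory.

Definition Kmn_vert (m n : nat) : finType := ('I_m + 'I_n)%type.
Definition Kmn_edge (m n : nat) : finType := ('I_m * 'I_n)%type.

(* Circular drawing: the vertices are placed at distinct points of a circle;
   up to rotation this is an injective labelling pos of the vertices, read
   cyclically.  Two straight chords cross iff their four endpoints are
   distinct and interleave in the cyclic order. *)
Definition chords_cross (m n : nat) (pos : Kmn_vert m n -> nat)
    (e f : Kmn_edge m n) : bool :=
  let a := pos (inl e.1) in let b := pos (inr e.2) in
  let c := pos (inl f.1) in let d := pos (inr f.2) in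
  [&& e.1 != f.1, e.2 != f.2 &
   (minn a b < minn c d < maxn a b) && (maxn a b < maxn c d)
   || (minn c d < minn a b < maxn c d) && (maxn c d < maxn a b)].

Definition GD (m n : nat) (pos : Kmn_vert m n -> nat) : rel (Kmn_edge m n) :=
  chords_cross pos.

Definition complement_rel (V : finType) (adj : rel V) : rel V :=
  fun x y => (x != y) && ~~ adj x y.

Local Open Scope ring_scope.

Definition psd (R : realType) (V : finType) (X : V -> V -> R) : Prop :=
  (forall i j, X i j = X j i) /\
  (forall v : V -> R, 0 <= \sum_(i : V) \sum_(j : V) v i * X i j * v j).

(* Lovasz number: max (= sup; the max is attained) of sum_{ij} X_ij over PSD X
   with X_ij = 0 on edges and trace X = 1. *)
Definition lovasz_theta (R : realType) (V : finType) (adj : rel V) : R :=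
  sup [set s : R | exists X : V -> V -> R,
        [/\ psd X, (forall i j, adj i j -> X i j = 0),
            \sum_(i : V) X i i = 1 &
            s = \sum_(i : V) \sum_(j : V) X i j]].

Local Close Scope ring_scope.

(* k-page book drawings of K_{m,n}: vertices at distinct positions on the
   spine (injective pos), each edge on one of k pages.  Two edges on the same
   page cross iff their endpoints interleave along the spine; each crossing
   pair {e,f} is counted once, via the ordered pair with min-end of e first. *)
Definition book_crossings (m n k : nat)
    (pos : {ffun Kmn_vert m n -> 'I_(m + n)})
    (page : {ffun Kmn_edge m n -> 'I_k}) : nat :=
  #|[set ef : (Kmn_edge m n * Kmn_edge m n)%type |
      let e := ef.1 in let f := ef.2 in
      let a := val (pos (inl e.1)) in let b := val (pos (inr e.2)) in
      let c := val (pos (inl f.1)) in let d := val (pos (inr f.2)) in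
      [&& page e == page f,
          minn a b < minn c d < maxn a b & maxn a b < maxn c d]]|.

(* nu_k(K_{m,n}): minimum number of crossings over all k-page drawings.
   The seed (m*n)^2 bounds every book_crossings value, so this is the min. *)
Definition nu_book_Kmn (m n k : nat) : nat :=
  \big[minn/((m * n) ^ 2)]_(d : ({ffun Kmn_vert m n -> 'I_(m + n)} *
                                 {ffun Kmn_edge m n -> 'I_k})%type
                            | injectiveb d.1)
     book_crossings d.1 d.2.

(* Main.v *)
Require Import Defs.
From HB Require Import structures.
From mathcomp Require Import all_boot all_order all_algebra.
From mathcomp Require Import classical_sets reals.
From mathcomp Require Import ring lra.
Import Order.TTheory GRing.Theory Num.Theory.
Set Implicit Arguments. Unset Strict Implicit. Unset Printing Implicit Defensive.

Local Open Scope ring_scope.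

Lemma sum_delta (R : realType) k (p q : 'I_k) :
  \sum_(c < k) ((p == c)%:R * (q == c)%:R : R) = (p == q)%:R.
Proof.
rewrite (bigD1 p) //= eqxx mul1r big1 ?addr0; first by rewrite eq_sym.
by move=> c; rewrite eq_sym => /negPf ->; rewrite mul0r.
Qed.

Lemma sum_ij (R : realType) k (p q : 'I_k) (x : R) :
  \sum_(c < k) ((1 - k%:R * (p == c)%:R) * x * (1 - k%:R * (q == c)%:R)) =
  x * (k%:R * (k%:R * (p == q)%:R - 1)).
Proof.
have E c : (1 - k%:R * (p == c)%:R) * x * (1 - k%:R * (q == c)%:R) =
   x * (1 - k%:R * (p == c)%:R - k%:R * (q == c)%:R
        + k%:R * k%:R * ((p == c)%:R * (q == c)%:R)) :> R by ring.
rewrite (eq_bigr _ (fun c _ => E c)) -mulr_sumr; congr (_ * _).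
rewrite !big_split /= !sumrN -!mulr_sumr sumr_const card_ord.
rewrite sum_delta.
have h1 : \sum_(c < k) ((p == c)%:R : R) = 1.
  transitivity (((p == p)%:R) : R); last by rewrite eqxx.
  by rewrite -sum_delta; apply: eq_bigr => c _; rewrite -natrM mulnb andbb.
have h2 : \sum_(c < k) ((q == c)%:R : R) = 1.
  transitivity (((q == q)%:R) : R); last by rewrite eqxx.
  by rewrite -sum_delta; apply: eq_bigr => c _; rewrite -natrM mulnb andbb.
rewrite h1 h2 -[1 *+ k]/(k%:R); ring.
Qed.

Lemma theta_le (R : realType) (V : finType) (adj : rel V) k (page : V -> 'I_k) :
  (0 < k)%N ->
  (forall i j, i != j -> page i = page j -> adj i j) ->
  lovasz_theta R adj <= k%:R.
Proof.
move=> k0 Hp; rewrite /lovasz_theta.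
set S := (X in sup X).
have [ne|emp] := boolp.pselect (S !=set0)%classic; last first.
  by move/nonemptyPn: emp => ->; rewrite sup0 ler0n.
apply: ge_sup => //.
move=> s [X [[_ Hpsd] HX Htr ->]].
pose v (c : 'I_k) (i : V) : R := 1 - k%:R * (page i == c)%:R.
have H0 : 0 <= \sum_(c < k) \sum_i \sum_j v c i * X i j * v c j.
  by apply: sumr_ge0 => c _; apply: Hpsd.
rewrite exchange_big /= in H0.
have E i j : \sum_(c < k) v c i * X i j * v c j =
   k%:R * (k%:R * (if i == j then X i j else 0) - X i j).
  rewrite /v sum_ij; case: (eqVneq i j) => [<-|ij].
  rewrite !eqxx /=; move: (X i i) (k%:R : R) => a b; ring.
  case: (eqVneq (page i) (page j)) => pij.
    by rewrite HX ?(Hp _ _ ij pij) //; move: (k%:R : R) => b; ring.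
  rewrite /=; move: (X i j) (k%:R : R) => a b; ring.
have : 0 <= \sum_i \sum_j k%:R * (k%:R * (if i == j then X i j else 0) - X i j).
  rewrite (le_trans H0) // le_eqVlt; apply/orP; left; apply/eqP.
  apply: eq_bigr => i _; rewrite exchange_big /=; apply: eq_bigr => j _; exact: E.
have F i : \sum_j k%:R * (k%:R * (if i == j then X i j else 0) - X i j) =
           k%:R * (k%:R * X i i - \sum_j X i j) :> R.
  rewrite -mulr_sumr sumrB -mulr_sumr; congr (_ * (_ * _ - _)).
  rewrite (bigD1 i) //= eqxx big1 ?addr0 // => j /negPf; rewrite eq_sym => -> //.
rewrite (eq_bigr _ (fun i _ => F i)) -mulr_sumr sumrB -mulr_sumr Htr mulr1.
rewrite pmulr_rge0 ?ltr0n // subr_ge0.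
by [].
Qed.

Local Close Scope ring_scope.

Theorem corollary11 (R : realType) (m n k : nat) :
  0 < m -> 0 < n -> 0 < k ->
  (forall pos : Kmn_vert m n -> nat, injective pos ->
     (k%:R < lovasz_theta R (complement_rel (GD pos)))%R) ->
  0 < nu_book_Kmn m n k.
Proof.
move=> m0 n0 k0 H; rewrite /nu_book_Kmn.
apply: (big_ind (fun x => 0 < x)).
- by rewrite expn_gt0 muln_gt0 m0 n0.
- by move=> x y x0 y0; rewrite leq_min x0 y0.
case=> pos page /= /injectiveP inj.
rewrite lt0n; apply/negP => /eqP /eqP; rewrite cards_eq0 => /eqP E.
have inj' : injective (fun v => val (pos v)).
  by move=> x y /val_inj /inj.
have := H _ inj'; apply/negP; rewrite -leNgt.
apply: (@theta_le R _ _ k page) => // e f ef pef.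
rewrite /complement_rel ef /= /GD /chords_cross.
apply/negP => /and3P [_ _ /orP [] /andP [] /andP [h1 h2] h3].
  have : (e, f) \in (finset.set0 : {set Kmn_edge m n * Kmn_edge m n}).
    by rewrite -E inE /= pef eqxx h1 h2 h3.
  by rewrite inE.
have : (f, e) \in (finset.set0 : {set Kmn_edge m n * Kmn_edge m n}).
    by rewrite -E inE /= pef eqxx h1 h2 h3.
by rewrite inE.
Qed.
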